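(* Let $m>1$ be an odd integer. If $\mathbf{u}_1,\mathbf{u}_2$ are units of $H_{1,2,2}$ with $\mathbf{u}_1-\mathbf{u}_2\in mH_{1,2,2}$, then $\mathbf{u}_1=\mathbf{u}_2$.
   Context: Let $\mathbf{i},\mathbf{j},\mathbf{k}$ be the standard quaternion units. $H_{1,2,2}$ is the subring of the quaternions equal to the $\mathbb{Z}$-module generated by $\mathbf{v}_1=1$, $\mathbf{v}_2=\mathbf{i}$, $\mathbf{v}_3=\tfrac12(1+\mathbf{i}+\sqrt2\,\mathbf{j})$, $\mathbf{v}_4=\tfrac12(1+\mathbf{i}+\sqrt2\,\mathbf{k})$. A unit is an element invertible in $H_{1,2,2}$ (equivalently of quaternion norm 1). *)

(* Defs.v *)
From mathcomp Require Import all_boot all_order all_algebra.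
Set Implicit Arguments. Unset Strict Implicit. Unset Printing Implicit Defensive.
Import Order.TTheory GRing.Theory Num.Theory.
Local Open Scope ring_scope.

Section Quat.
Variable R : rcfType.

(* a quaternion q0 + q1 i + q2 j + q3 k *)
Record quat := Quat { q0 : R; q1 : R; q2 : R; q3 : R }.

Definition qadd (x y : quat) : quat :=
  Quat (q0 x + q0 y) (q1 x + q1 y) (q2 x + q2 y) (q3 x + q3 y).
Definition qsub (x y : quat) : quat :=
  Quat (q0 x - q0 y) (q1 x - q1 y) (q2 x - q2 y) (q3 x - q3 y).
Definition qscale (r : R) (x : quat) : quat :=
  Quat (r * q0 x) (r * q1 x) (r * q2 x) (r * q3 x).
(* Hamilton product: i^2 = j^2 = k^2 = ijk = -1 *)
Definition qmul (x y : quat) : quat :=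
  Quat (q0 x * q0 y - q1 x * q1 y - q2 x * q2 y - q3 x * q3 y)
       (q0 x * q1 y + q1 x * q0 y + q2 x * q3 y - q3 x * q2 y)
       (q0 x * q2 y - q1 x * q3 y + q2 x * q0 y + q3 x * q1 y)
       (q0 x * q3 y + q1 x * q2 y - q2 x * q1 y + q3 x * q0 y).
Definition qone : quat := Quat 1 0 0 0.

Definition v1 : quat := Quat 1 0 0 0.
Definition v2 : quat := Quat 0 1 0 0.
Definition v3 : quat := Quat (1/2) (1/2) (Num.sqrt 2 / 2) 0.
Definition v4 : quat := Quat (1/2) (1/2) 0 (Num.sqrt 2 / 2).

Definition inH122 (q : quat) : Prop :=
  exists a b c d : int,
    q = qadd (qadd (qscale a%:~R v1) (qscale b%:~R v2))
             (qadd (qscale c%:~R v3) (qscale d%:~R v4)).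

Definition unitH122 (u : quat) : Prop :=
  inH122 u /\ exists v, inH122 v /\ qmul u v = qone /\ qmul v u = qone.

Definition in_mH122 (m : nat) (q : quat) : Prop :=
  exists h, inH122 h /\ q = qscale m%:R h.

End Quat.

(* Main.v *)
Require Import Defs.
From mathcomp Require Import all_boot all_order all_algebra.
From mathcomp Require Import ring lra zify.
Import Order.TTheory GRing.Theory Num.Theory.
Local Open Scope ring_scope.
Set Implicit Arguments.

Section S.
Variable R : rcfType.

Definition qN (x : quat R) : R := q0 x ^+ 2 + q1 x ^+ 2 + q2 x ^+ 2 + q3 x ^+ 2.

Lemma qN_mul (x y : quat R) : qN (qmul x y) = qN x * qN y.
Proof. case: x => a b c d; case: y => e f g h; rewrite /qN /qmul /=; ring. Qed.

Lemma qN_ge0 x : 0 <= qN x.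
Proof. by rewrite /qN !addr_ge0 // ?sqr_ge0. Qed.

Lemma qN_int q : inH122 q -> exists M : int, (0 <= M)%R /\ qN q = M%:~R.
Proof.
case=> a [b [c [d ->]]].
have hs : Num.sqrt (2:R) ^+ 2 = 2 by rewrite sqr_sqrtr // ler0n.
set s := Num.sqrt (2:R) in hs *.
exists (a^+2+b^+2+a*(c+d)+b*(c+d)+c^+2+d^+2+c*d)%R.
have E : qN (qadd (qadd (qscale a%:~R (v1 R)) (qscale b%:~R (v2 R)))
             (qadd (qscale c%:~R (v3 R)) (qscale d%:~R (v4 R)))) =
  (a^+2+b^+2+a*(c+d)+b*(c+d))%:~R + (c%:~R^+2 + d%:~R^+2 + 2 * c%:~R * d%:~R)/2
    + (c%:~R^+2 + d%:~R^+2)/4 * s^+2.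
  rewrite /qN /= -/s; clearbody s; by field.
split; last by rewrite E hs; field.
have : (0:R) <= ((a^+2+b^+2+a*(c+d)+b*(c+d)+c^+2+d^+2+c*d)%R)%:~R.
  have -> : ((a^+2+b^+2+a*(c+d)+b*(c+d)+c^+2+d^+2+c*d)%R)%:~R = qN
     (qadd (qadd (qscale a%:~R (v1 R)) (qscale b%:~R (v2 R)))
             (qadd (qscale c%:~R (v3 R)) (qscale d%:~R (v4 R)))) :> R.
    by rewrite E hs; field.
  exact: qN_ge0.
by rewrite ler0z.
Qed.

Lemma unit_N1 u : unitH122 u -> qN u = 1.
Proof.
case=> Hu [v [Hv [Huv _]]].
have := qN_mul u v; rewrite Huv.
have -> : qN (qone R) = 1 by rewrite /qN /=; ring.
case: (qN_int Hu) => M [M0 ->]; case: (qN_int Hv) => K [K0 ->].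
move/eqP; rewrite -intrM eq_sym -[1]/(1%:~R) eqr_int => /eqP H.
have H' : K * M = 1 by move: H; rewrite mulrC => ->.
have := intUnitRing.unitzPl H'; rewrite qualifE /= => /orP[/eqP->|/eqP HM]; first by [].
by move: M0; rewrite HM.
Qed.

End S.

Theorem lemma33 (R : rcfType) (m : nat) (u1 u2 : quat R) :
  (1 < m)%N -> odd m ->
  unitH122 u1 -> unitH122 u2 ->
  in_mH122 m (qsub u1 u2) ->
  u1 = u2.
Proof.
move=> m1 mo U1 U2 [h [Hh E]].
have m3 : (3 <= m)%N by move: m1 mo; case: m {E} => [|[|[|]]].
have N1 := unit_N1 U1; have N2 := unit_N1 U2.
case: (qN_int Hh) => M [M0 NM].
have P : qN (qsub u1 u2) + qN (qadd u1 u2) = 2 * qN u1 + 2 * qN u2.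
  by clear; case: u1 => *; case: u2 => *; rewrite /qN /=; ring.
have Em : qN (qsub u1 u2) = m%:R ^+ 2 * qN h.
  by rewrite E; clear; case: h => *; rewrite /qN /=; ring.
have M00 : M = 0.
  case: (M =P 0) => // /eqP Mn.
  have M1 : (1 <= M)%R by lia.
  have Hy : (1:R) <= M%:~R by rewrite -[1]/(1%:~R) ler_int.
  have Hx : (3:R) <= m%:R by rewrite (ler_nat R 3 m).
  have Hq := qN_ge0 (qadd u1 u2).
  rewrite N1 N2 Em NM in P.
  move: Hy Hx Hq P; move: (M%:~R : R) (m%:R : R) (qN (qadd u1 u2)) => y x z Hy Hx Hq P; rewrite !mulr1 in P.
  have Hx2 : 9 <= x ^+ 2 by nra.
  have H2 : x ^+ 2 <= x ^+ 2 * y by nra.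
  exfalso; clear -P Hx2 H2 Hq; lra.
rewrite M00 /= in NM.
have Z : qN (qsub u1 u2) = 0 by rewrite Em NM mulr0.
move: Z; case: u1 {U1 E N1 P Em} => a b c d; case: u2 {U2 N2} => e f g k.
rewrite /qN /= => Z.
have s1 := sqr_ge0 (a - e); have s2 := sqr_ge0 (b - f).
have s3 := sqr_ge0 (c - g); have s4 := sqr_ge0 (d - k).
have ha : (a - e) ^+ 2 = 0 by clear -Z s1 s2 s3 s4; lra.
have hb : (b - f) ^+ 2 = 0 by clear -Z s1 s2 s3 s4; lra.
have hc : (c - g) ^+ 2 = 0 by clear -Z s1 s2 s3 s4; lra.
have hd : (d - k) ^+ 2 = 0 by clear -Z s1 s2 s3 s4; lra.
move: ha hb hc hd; rewrite -!/(_ ^+ 2); move=> /eqP + /eqP + /eqP + /eqP.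
by rewrite !sqrf_eq0 !subr_eq0 => /eqP-> /eqP-> /eqP-> /eqP->.
Qed.
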